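(* For every integer $r \ge 2$, $\mathrm{gp_e}(Q_r) = 2^r$.
   Context: $Q_r$ is the $r$-dimensional hypercube: vertex set $\{0,1\}^r$, two vertices adjacent iff they differ in exactly one coordinate. A set $S$ of edges of a graph $G$ is an edge general position set if no geodesic (shortest path) of $G$ contains three edges of $S$; $\mathrm{gp_e}(G)$ is the maximum cardinality of an edge general position set of $G$. *)

(* Defs.v *)
From mathcomp Require Import all_boot.
From mathcomp Require Import boolp.
Set Implicit Arguments. Unset Strict Implicit. Unset Printing Implicit Defensive.

(* A simple graph is given by a finite vertex type T and an adjacency
   relation e : rel T (assumed symmetric and irreflexive for the graphs used). *)
Section Graph.
Variables (T : finType) (e : rel T).

Definition is_edge (E : {set T}) : Prop := exists x y, e x y /\ E = [set x; y].

(* A walk is x :: p with consecutive vertices adjacent (path e x p); its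
   length is size p.  A geodesic is a walk that is no longer than any walk
   with the same endpoints (i.e. a shortest path). *)
Definition geodesic (x : T) (p : seq T) : Prop :=
  path e x p /\
  forall q : seq T, path e x q -> last x q = last x p -> size p <= size q.

Definition walk_edges (x : T) (p : seq T) : {set {set T}} :=
  [set E in [seq [set ab.1; ab.2] | ab <- zip (x :: p) p]].

Definition edge_gp_set (S : {set {set T}}) : Prop :=
  (forall E, E \in S -> is_edge E) /\
  forall x p, geodesic x p -> #|S :&: walk_edges x p| < 3.

Definition gpe : nat :=
  \max_(S : {set {set T}} | `[< edge_gp_set S >]) #|S|.

End Graph.

Definition hcube_adj (r : nat) : rel {ffun 'I_r -> bool} :=
  fun x y => #|[set i | x i != y i]| == 1.

(* Main.v *)
Require Import Defs.
From mathcomp Require Import all_boot.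
From mathcomp Require Import boolp.
From mathcomp Require Import zify.
From mathcomp Require Import all_boot.
From mathcomp Require Import boolp.

Lemma sum_card (T : finType) (A : {set T}) (P : pred T) :
  \sum_(x in A) (P x : nat) = #|A :&: [set x | P x]|.
Proof.
rewrite -sum1_card [RHS]big_mkcond [LHS]big_mkcond /=.
apply: eq_bigr => x _; rewrite !inE; by case: (x \in A); case: (P x).
Qed.

Lemma sum_card2 (T : finType) (A B : {set T}) :
  \sum_(x in A) (x \in B : nat) = #|A :&: B|.
Proof.
rewrite -sum1_card [RHS]big_mkcond [LHS]big_mkcond /=.
apply: eq_bigr => x _; rewrite !inE; by case: (x \in A); case: (x \in B).
Qed.

Section Cube.
Variable r : nat.
Local Notation V := {ffun 'I_r -> bool}.
Definition dif (x y : V) := [set j | x j != y j].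

Lemma dif_sum x y : #|dif x y| = \sum_j (x j != y j : nat).
Proof.
have := @sum_card _ [set: 'I_r] (fun j => x j != y j); rewrite setTI => <-.
by apply: eq_bigl => j; rewrite inE.
Qed.

Lemma dif_tri x y z : #|dif x z| <= #|dif x y| + #|dif y z|.
Proof.
apply: leq_trans (leq_card_setU (dif x y) (dif y z)); apply: subset_leq_card; apply/subsetP => j.
rewrite !inE; by case: (x j); case: (y j); case: (z j).
Qed.

Lemma dif_walk x q : path (@hcube_adj r) x q -> #|dif x (last x q)| <= size q.
Proof.
elim: q x => [|y q IH] x /=; first by move=> _; apply/eq_leq/eqP; rewrite cards_eq0; apply/eqP/setP => j; rewrite !inE eqxx.
case/andP => /eqP hxy /IH h; apply: leq_trans (dif_tri x y _) _.
by rewrite hxy add1n ltnS.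
Qed.

Definition flip1 (x : V) i : V := [ffun j => x j (+) (j == i)].

Lemma adj_flip1 x i : hcube_adj x (flip1 x i).
Proof.
rewrite /hcube_adj (_ : [set j | _] = [set i]) ?cards1 //; apply/setP => j; rewrite !inE ffunE.
by case: (x j); case: (j == i).
Qed.

Fixpoint wk (x : V) (s : seq 'I_r) : seq V :=
  match s with [::] => [::] | i :: s' => flip1 x i :: wk (flip1 x i) s' end.

Lemma wk_path x s : path (@hcube_adj r) x (wk x s).
Proof. elim: s x => [|i s IH] x //=; by rewrite adj_flip1 IH. Qed.

Lemma wk_size x s : size (wk x s) = size s.
Proof. elim: s x => [|i s IH] x //=; by rewrite IH. Qed.

Lemma wk_last x s : uniq s -> last x (wk x s) = [ffun j => x j (+) (j \in s)].
Proof.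
elim: s x => [|i s IH] x /=; first by move=> _; apply/ffunP => j; rewrite ffunE in_nil addbF.
case/andP => his us; rewrite IH //; apply/ffunP => j; rewrite !ffunE inE.
case: (eqVneq j i) => [->|_]; last by rewrite addbF.
by rewrite (negbTE his) addbF addbT.
Qed.

Lemma geo_dist x p : geodesic (@hcube_adj r) x p -> size p <= #|dif x (last x p)|.
Proof.
case=> _ H; set y := last x p.
have := H (wk x (enum (dif x y))) (wk_path _ _).
rewrite wk_last ?enum_uniq // wk_size -cardE; apply.
apply/ffunP => j; rewrite ffunE mem_enum inE; by case: (x j); case: (y j).
Qed.

Definition cnt (i : 'I_r) (x : V) (p : seq V) := count (fun ab : V * V => ab.1 i != ab.2 i) (zip (x :: p) p).

Lemma cnt_ge (i : 'I_r) (x : V) p : (x i != last x p i : nat) <= cnt i x p.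
Proof.
rewrite /cnt; elim: p x => [|y p IH] x /=; first by rewrite eqxx.
apply: leq_trans (leq_add (leqnn (x i != y i : nat)) (IH y)).
by case: (x i); case: (y i); case: (last y p i).
Qed.

Lemma size_cnt x p : path (@hcube_adj r) x p -> size p = \sum_i cnt i x p.
Proof.
rewrite /cnt; elim: p x => [|y p IH] x /=; first by rewrite big1.
case/andP => /eqP hxy /IH ->; rewrite big_split /= -dif_sum hxy.
by rewrite add1n.
Qed.

Lemma geo_cnt (x : V) p (i : 'I_r) : geodesic (@hcube_adj r) x p -> cnt i x p <= 1.
Proof.
move=> g; have := geo_dist _ _ g; rewrite (size_cnt _ _ (proj1 g)) dif_sum.
rewrite (bigD1 i) //= [X in _ <= X](bigD1 i) //=.
have : \sum_(j | j != i) (x j != last x p j : nat) <= \sum_(j | j != i) cnt j x p.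
  by apply: leq_sum => j _; apply: cnt_ge.
have := cnt_ge i x p; case: (x i != last x p i) => /=; lia.
Qed.

Definition flipk (x : V) (k : nat) : V := [ffun j : 'I_r => x j (+) (j < k)].

Lemma adj_flipk x k : k < r -> hcube_adj (flipk x k) (flipk x k.+1).
Proof.
move=> hk; rewrite /hcube_adj (_ : [set j | _] = [set Ordinal hk]) ?cards1 //.
apply/setP => j; rewrite !inE !ffunE ltnS -val_eqE /=.
by case: (x j); case: ltngtP.
Qed.

Lemma path_iota (T : Type) (e : rel T) f m n :
  (forall k, k < m + n -> e (f k) (f k.+1)) -> path e (f m) (map f (iota m.+1 n)).
Proof.
elim: n m => [|n IH] m H //=.
rewrite H ?addnS ?ltnS ?leq_addr //; apply: IH => k hk; apply: H; by rewrite addnS -addSn.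
Qed.

Lemma zip_iota (T : Type) (f : nat -> T) m n :
  zip (map f (iota m n.+1)) (map f (iota m.+1 n)) = map (fun k => (f k, f k.+1)) (iota m n).
Proof. elim: n m => [|n IH] m //=; by rewrite -IH. Qed.

Lemma last_iota m n : last m (iota m.+1 n) = m + n.
Proof. elim: n m => [|n IH] m /=; by rewrite ?addn0 // IH addnS. Qed.

Definition W x := map (flipk x) (iota 1 r).
Definition We x := walk_edges (flipk x 0) (W x).

Lemma geo_flipk x : geodesic (@hcube_adj r) (flipk x 0) (W x).
Proof.
split; first by apply: path_iota => k hk; apply: adj_flipk.
move=> q hq; rewrite /W last_map last_iota add0n size_map size_iota => hl.
apply: leq_trans (dif_walk _ _ hq); rewrite hl.
rewrite (_ : dif _ _ = setT) ?cardsT ?card_ord //; apply/setP => j.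
by rewrite !inE !ffunE ltn_ord; case: (x j).
Qed.

Lemma edge_in x k : k < r -> [set flipk x k; flipk x k.+1] \in We x.
Proof.
move=> hk; rewrite /We /walk_edges inE.
have -> : flipk x 0 :: W x = map (flipk x) (iota 0 r.+1) by [].
rewrite /W zip_iota; apply/mapP; exists (flipk x k, flipk x k.+1) => //.
by apply/mapP; exists k => //; rewrite mem_iota.
Qed.

Lemma sum_cardT (T : finType) (P : pred T) :
  \sum_x (P x : nat) = #|[set x | P x]|.
Proof. rewrite -sum1dep_card [RHS]big_mkcond; apply: eq_bigr => x _; by case: (P x). Qed.

Lemma cover E : is_edge (@hcube_adj r) E -> 2 <= #|[set x | E \in We x]|.
Proof.
case=> a [b [hab ->]].
case/cards1P: hab => i hi.
have hb : b = flip1 a i.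
  apply/ffunP => j; move/setP/(_ j): hi; rewrite !inE !ffunE /= => <-.
  by case: (a j); case: (b j).
have hab : a != b.
  apply/negP => /eqP e; move/setP/(_ i): hi; by rewrite !inE e !eqxx.
have key : forall c, flipk (flipk c i) i = c /\ flipk (flipk c i) i.+1 = flip1 c i.
  move=> c; split; apply/ffunP => j; rewrite !ffunE; first by case: (c j); case: (j < i).
  rewrite ltnS -val_eqE /=; by case: (c j); case: ltngtP.
have hbb : flip1 b i = a.
  by apply/ffunP => j; rewrite hb !ffunE; case: (a j); case: (j == i).
apply: leq_trans (_ : #|[set flipk a i; flipk b i]| <= _).
  rewrite cards2; case: eqP => // e; move: hab; have [<- _] := key a; rewrite e.
  by have [-> _] := key b; rewrite eqxx.
apply: subset_leq_card; apply/subsetP => x; rewrite in_set2 => /orP [] /eqP ->; rewrite in_set.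
  by have [e1 e2] := key a; rewrite -{1}e1 hb -e2; apply: edge_in.
have [e1 e2] := key b; rewrite setUC -{1}e1 -hbb -e2; apply: edge_in => //.
Qed.

Lemma upper S : edge_gp_set (@hcube_adj r) S -> #|S| <= 2 ^ r.
Proof.
case=> HE HG.
have h1 : \sum_(x : V) #|S :&: We x| <= 2 * 2 ^ r.
  apply: leq_trans (_ : \sum_(x : V) 2 <= _).
    by apply: leq_sum => x _; have := HG _ _ (geo_flipk x).
  by rewrite sum_nat_const card_ffun card_bool card_ord mulnC.
have h2 : \sum_(x : V) #|S :&: We x| = \sum_(E in S) \sum_(x : V) (E \in We x : nat).
  rewrite exchange_big /=; apply: eq_bigr => x _; by rewrite sum_card2.
have h3 : 2 * #|S| <= \sum_(E in S) \sum_(x : V) (E \in We x : nat).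
  rewrite mulnC -sum_nat_const; apply: leq_sum => E hE.
  rewrite sum_cardT; exact: cover (HE _ hE).
rewrite -h2 in h3; have := leq_trans h3 h1; by rewrite leq_pmul2l.
Qed.

Section Lower.
Variables (i0 i1 : 'I_r).
Hypothesis hi : i0 != i1.

Definition dd (x : V) := if x i0 == x i1 then i0 else i1.
Definition fd (x : V) : {set V} := [set x; flip1 x (dd x)].

Lemma fd_pair y : let y' := flip1 y (dd y) in
  (y i0 != y' i0) || (y i1 != y' i1).
Proof.
have hi' : i1 != i0 by rewrite eq_sym.
rewrite /= /dd !ffunE; case: (y i0 == y i1); rewrite ?eqxx ?(negbTE hi) ?(negbTE hi');
  by case: (y i0); case: (y i1).
Qed.

Lemma key01 a b y : [set a; b] = fd y -> (a i0 != b i0) || (a i1 != b i1).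
Proof.
move=> H; set y' := flip1 y (dd y).
have hyy : y != y'.
  apply/negP => /eqP /ffunP /(_ (dd y)); rewrite ffunE eqxx; by case: (y (dd y)).
have ha : a \in fd y by rewrite -H set21.
have hb : b \in fd y by rewrite -H set22.
have hy : y \in [set a; b] by rewrite H set21.
have hy' : y' \in [set a; b] by rewrite H set22.
rewrite /fd -/y' in ha hb.
have := fd_pair y; rewrite -/y'.
move: ha hb; rewrite !in_set2 => /orP [] /eqP ha /orP [] /eqP hb; subst a b.
- by move: hy'; rewrite in_set2 orbb eq_sym (negbTE hyy).
- by [].
- by rewrite /=; case: (y i0) (y' i0) (y i1) (y' i1) => [] [] [] [].
- by move: hy; rewrite in_set2 orbb (negbTE hyy).
Qed.

Lemma fd_inj : injective fd.
Proof.
have hi' : i1 != i0 by rewrite eq_sym.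
move=> x y H.
have hx : x \in fd y by rewrite -H set21.
have hy : y \in fd x by rewrite H set21.
rewrite in_set2 in hx; case/orP: hx => /eqP hx //.
rewrite in_set2 in hy; case/orP: hy => /eqP hy //.
have e0 := congr1 (fun f : V => f i0) hx; have e1 := congr1 (fun f : V => f i1) hx.
have f0 := congr1 (fun f : V => f i0) hy; have f1 := congr1 (fun f : V => f i1) hy.
move: e0 e1 f0 f1; rewrite /dd /= !ffunE.
case: (x i0); case: (x i1); case: (y i0); case: (y i1);
  rewrite /= ?eqxx ?(negbTE hi) ?(negbTE hi') //=.
Qed.

Definition S01 := fd @: [set: V].

Lemma card_S01 : #|S01| = 2 ^ r.
Proof. by rewrite card_imset ?cardsT ?card_ffun ?card_bool ?card_ord //; apply: fd_inj. Qed.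

Lemma gp_S01 : edge_gp_set (@hcube_adj r) S01.
Proof.
split.
  move=> E /imsetP [y _ ->]; exists y, (flip1 y (dd y)); split => //; exact: adj_flip1.
move=> x p g.
pose P0 := fun ab : V * V => ab.1 i0 != ab.2 i0.
pose P1 := fun ab : V * V => ab.1 i1 != ab.2 i1.
pose s := [seq [set ab.1; ab.2] | ab <- zip (x :: p) p & predU P0 P1 ab].
apply: (@leq_ltn_trans (size s)).
  apply: leq_trans (card_size s); apply: subset_leq_card; apply/subsetP => E.
  rewrite inE => /andP [/imsetP [y _ ->]] .
  rewrite /walk_edges inE => /mapP [ab hab hE].
  rewrite /s; apply/mapP; exists ab => //; rewrite mem_filter hab andbT /=.
  by rewrite /P0 /P1; apply: (key01 _ _ _ (esym hE)).
rewrite size_map size_filter.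
have := count_predUI P0 P1 (zip (x :: p) p).
have := geo_cnt x p i0 g; have := geo_cnt x p i1 g; rewrite /cnt -/P0 -/P1 => h1 h0.
move=> h; apply: (@leq_ltn_trans (count P0 (zip (x :: p) p) + count P1 (zip (x :: p) p))); last exact: (leq_ltn_trans (leq_add h0 h1)).
rewrite -h; exact: leq_addr.
Qed.
End Lower.
End Cube.

Theorem theorem3p2 (r : nat) : 2 <= r -> gpe (@hcube_adj r) = 2 ^ r.
Proof.
move=> hr; apply/eqP; rewrite eqn_leq; apply/andP; split.
  apply/bigmax_leqP => S /asboolP; exact: upper.
have h0 : 0 < r by apply: leq_trans hr.
pose i0 : 'I_r := Ordinal h0; pose i1 : 'I_r := Ordinal hr.
have hi : i0 != i1 by [].
rewrite -(@card_S01 r i0 i1 hi).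
have H := @leq_bigmax_cond _ (fun S => `[< edge_gp_set (@hcube_adj r) S >]) (fun S => #|S|)
  (@S01 r i0 i1 : {set {set {ffun 'I_r -> bool}}}) (asboolT (@gp_S01 r i0 i1 hi)).
exact H.
Qed.
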